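(* Let $\mathbb{A}$ and $\mathbb{B}$ be $\sigma$-structures and let $k\ge\max_{f\in\sigma}\mathrm{ar}(f)$. If there is an overcast from $\mathbb{A}$ to $\mathbb{B}$, then $\mathbb{A}\succeq_k\mathbb{B}$, i.e. $\mathrm{opt}_{k}^{\mathrm{frac}}(\mathbb{A},\mathbb{C})\ge\mathrm{opt}_{k}^{\mathrm{frac}}(\mathbb{B},\mathbb{C})$ for every $\sigma$-structure $\mathbb{C}$.
   Context: A $\sigma$-structure $\mathbb{A}$ is a finite domain $A$ with functions $f^{\mathbb{A}}\colon A^{\mathrm{ar}(f)}\to\mathbb{Q}_{\ge0}$, $f\in\sigma$; $\mathrm{tup}(\mathbb{A})$ is the set of pairs $(f,\bar x)$ with $\bar x\in A^{\mathrm{ar}(f)}$. An overcast from $\mathbb{A}$ to $\mathbb{B}$ is a probability distribution $\omega$ over maps $g\colon A\to B$ such that for every $(f,\bar x)\in\mathrm{tup}(\mathbb{B})$, $\mathbb{E}_{g\sim\omega}\sum_{\bar y:\,g(\bar y)=\bar x}f^{\mathbb{A}}(\bar y)\ge f^{\mathbb{B}}(\bar x)$. For a tuple $\bar x$, $\{\bar x\}$ denotes the set of its entries. The Sherali–Adams relaxation of level $k$ of $(\mathbb{A},\mathbb{C})$ is the linear program with a variable $\lambda(X,s)$ for each $X\subseteq A$ with $|X|\le k$ and each map $s\colon X\to C$, maximising $\sum_{(f,\bar x)\in\mathrm{tup}(\mathbb{A})}\sum_{s\colon\{\bar x\}\to C}\lambda(\{\bar x\},s)f^{\mathbb{A}}(\bar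 x)f^{\mathbb{C}}(s(\bar x))$ subject to: $\lambda(X,s)=\sum_{r\colon Y\to C,\ r|_X=s}\lambda(Y,r)$ for all $X\subseteq Y\subseteq A$ with $|Y|\le k$ and $s\colon X\to C$; $\sum_{s\colon X\to C}\lambda(X,s)=1$ for all $X\subseteq A$ with $|X|\le k$; and $\lambda(X,s)\ge0$. Its optimum value is denoted $\mathrm{opt}_k^{\mathrm{frac}}(\mathbb{A},\mathbb{C})$. *)

(* Defs.v *)
From HB Require Import structures.
From mathcomp Require Import all_boot all_order all_algebra.
From mathcomp Require Import classical_sets reals.
Set Implicit Arguments. Unset Strict Implicit. Unset Printing Implicit Defensive.
Import Order.TTheory GRing.Theory Num.Theory.
Local Open Scope ring_scope.
Local Open Scope classical_set_scope.

Section Defs.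
Variables (sig : finType) (ar : sig -> nat).

Definition sstruct (A : finType) := forall f : sig, (ar f).-tuple A -> rat.

Definition nonneg_struct (A : finType) (SA : sstruct A) :=
  forall f x, 0 <= SA f x.

Definition overcast (R : realType) (A B : finType) (SA : sstruct A)
    (SB : sstruct B) (omega : {ffun A -> B} -> R) :=
  [/\ forall g, 0 <= omega g,
      \sum_(g : {ffun A -> B}) omega g = 1 &
      forall (f : sig) (x : (ar f).-tuple B),
        ratr (SB f x) <=
        \sum_(g : {ffun A -> B})
           omega g * \sum_(y : (ar f).-tuple A | map_tuple g y == x)
                        ratr (SA f y)].

Definition exists_overcast (R : realType) (A B : finType) (SA : sstruct A)
    (SB : sstruct B) := exists omega : {ffun A -> B} -> R, overcast SA SB omega.

(* A map s : X -> C with X a subset of A is encoded as a partial map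
   s : {ffun A -> option C} with domain X = pdom s (s x = None iff x \notin X).
   This is a bijective encoding of the pairs (X, s) indexing the variables. *)
Definition pdom (A C : finType) (s : {ffun A -> option C}) : {set A} :=
  [set x | s x != None].

Definition prestr (A C : finType) (X : {set A}) (r : {ffun A -> option C}) :
  {ffun A -> option C} := [ffun x => if x \in X then r x else None].

(* Feasible solutions of the level-k Sherali-Adams relaxation of (A, C).
   lam s is the variable lambda(pdom s, s); for #|pdom s| > k there is no
   such variable, and we fix lam s = 0 (these values never enter the
   objective when k >= max arity). *)
Definition SA_feasible (R : realType) (k : nat) (A C : finType)
    (lam : {ffun A -> option C} -> R) :=
  [/\ forall s, (k < #|pdom s|)%N -> lam s = 0,
      forall (X Y : {set A}) (s : {ffun A -> option C}),
        X \subset Y -> (#|Y| <= k)%N -> pdom s = X ->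
        lam s = \sum_(r : {ffun A -> option C} |
                        (pdom r == Y) && (prestr X r == s)) lam r,
      forall X : {set A}, (#|X| <= k)%N ->
        \sum_(s : {ffun A -> option C} | pdom s == X) lam s = 1 &
      forall s, (#|pdom s| <= k)%N -> 0 <= lam s].

(* Objective: sum over (f,x) in tup(A), s : {x} -> C of
   lambda({x}, s) f^A(x) f^C(s(x)).  For s with domain {x}, s(x) is the
   unique tuple t with s(x_i) = Some t_i. *)
Definition SA_value (R : realType) (A C : finType) (SA : sstruct A)
    (SC : sstruct C) (lam : {ffun A -> option C} -> R) : R :=
  \sum_(f : sig) \sum_(x : (ar f).-tuple A)
    \sum_(s : {ffun A -> option C} | pdom s == [set y in x])
      \sum_(t : (ar f).-tuple C | [forall i, s (tnth x i) == Some (tnth t i)])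
        lam s * ratr (SA f x) * ratr (SC f t).

Definition opt_frac (R : realType) (k : nat) (A C : finType) (SA : sstruct A)
    (SC : sstruct C) : R :=
  sup [set SA_value SA SC lam | lam in [set lam | SA_feasible k lam]].
End Defs.

(* Main.v *)
Require Import Defs.
From HB Require Import structures.
From mathcomp Require Import all_boot all_order all_algebra.
From mathcomp Require Import boolp classical_sets reals.
Import Order.TTheory GRing.Theory Num.Theory.
Local Open Scope ring_scope.

Section Helpers.
Variable R : realType.

Lemma sum_fiber (T U : finType) (P : pred T) (Q : pred U) (h : T -> U)
  (F : U -> T -> R) :
  \sum_(u | Q u) \sum_(t | P t && (h t == u)) F u t =
  \sum_(t | P t && Q (h t)) F (h t) t.
Proof.
rewrite (partition_big h Q) /=; last by move=> t /andP[].
apply: eq_bigr => u Qu; apply: eq_big => [t|t /andP[_ /eqP->]] //.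
by case: eqP => [->|_]; rewrite ?Qu ?andbT ?andbF.
Qed.

Lemma feas_ge0 k (A C : finType) (lam : {ffun A -> option C} -> R) :
  SA_feasible k lam -> forall s, 0 <= lam s.
Proof.
case=> H0 _ _ Hn s; case: (leqP #|pdom s| k) => h; first exact: Hn.
by rewrite H0.
Qed.

Lemma feas_le1 k (A C : finType) (lam : {ffun A -> option C} -> R) :
  SA_feasible k lam -> forall s, lam s <= 1.
Proof.
move=> F s; have [H0 _ H1 _] := F.
case: (leqP #|pdom s| k) => h; last by rewrite H0.
rewrite -(H1 _ h) (bigD1 s) //= lerDl; apply: sumr_ge0 => *; exact: feas_ge0 F _.
Qed.

Definition pull (A B C : finType) (g : {ffun A -> B}) (r : {ffun B -> option C}) :
  {ffun A -> option C} := [ffun a => r (g a)].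
#[global] Arguments pull {A B C}.

Lemma pdom_h (A B C : finType) (g : {ffun A -> B}) (r : {ffun B -> option C})
  (X : {set A}) : pdom r = g @: X -> pdom (prestr X (pull g r)) = X.
Proof.
move=> E; apply/setP => a; rewrite !inE !ffunE.
case aX: (a \in X) => //=.
have : g a \in pdom r by rewrite E imset_f.
by rewrite inE.
Qed.

Lemma pdom_prestr (A C : finType) (Z : {set A}) (q : {ffun A -> option C}) :
  Z \subset pdom q -> pdom (prestr Z q) = Z.
Proof.
move=> /fintype.subsetP S; apply/setP => a; rewrite !inE !ffunE.
case aZ: (a \in Z) => //=.
by have := S a aZ; rewrite inE.
Qed.

End Helpers.

Section Constr.
Variables (R : realType) (A B C : finType) (k : nat)
  (om : {ffun A -> B} -> R) (lamB : {ffun B -> option C} -> R).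
Hypotheses (om0 : forall g, 0 <= om g) (om1 : \sum_g om g = 1)
  (FB : SA_feasible k lamB).

Definition lamA (s : {ffun A -> option C}) : R :=
  if (#|pdom s| <= k)%N then
    \sum_(g : {ffun A -> B}) om g *
      \sum_(r : {ffun B -> option C} |
              (pdom r == g @: pdom s) && (prestr (pdom s) (pull g r) == s))
        lamB r
  else 0.

Lemma lamA_feas : SA_feasible k lamA.
Proof.
split.
- by move=> s h; rewrite /lamA leqNgt h.
- move=> X Y s sXY hY ds.
  have hX : (#|X| <= k)%N := leq_trans (subset_leq_card sXY) hY.
  rewrite /lamA ds hX.
  transitivity (\sum_g om g * \sum_(q | (pdom q == g @: Y) &&
                   (prestr X (pull g q) == s)) lamB q).
    apply: eq_bigr => g _; congr (_ * _).
    have gXY : g @: X \subset g @: Y by apply: imsetS.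
    have hgY : (#|g @: Y| <= k)%N := leq_trans (leq_imset_card _ _) hY.
    have [_ F2 _ _] := FB.
    rewrite (eq_bigr (fun r => \sum_(q | (pdom q == g @: Y) &&
                 (prestr (g @: X) q == r)) lamB q)); last first.
      by move=> r /andP[/eqP dr _]; apply: F2.
    rewrite (@sum_fiber R _ _ (fun q : {ffun B -> option C} => pdom q == g @: Y)
      (fun r => (pdom r == g @: X) && (prestr X (pull g r) == s))
      (fun q => prestr (g @: X) q) (fun _ q => lamB q)).
    apply: eq_bigl => q; case dq: (pdom q == g @: Y) => //=.
    rewrite pdom_prestr; last by rewrite (eqP dq).
    rewrite eqxx /=; congr (_ == s); apply/ffunP => a; rewrite !ffunE.
    by case: ifP => // aX; rewrite imset_f.
  symmetry.
  rewrite (eq_bigr (fun t => \sum_g om g * \sum_(q | (pdom q == g @: Y) &&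
             (prestr Y (pull g q) == t)) lamB q)); last first.
    by move=> t /andP[/eqP dt _]; rewrite /lamA dt hY.
  rewrite exchange_big /=; apply: eq_bigr => g _; rewrite -big_distrr /=.
  congr (_ * _).
  rewrite (@sum_fiber R _ _ (fun q : {ffun B -> option C} => pdom q == g @: Y)
      (fun t => (pdom t == Y) && (prestr X t == s))
      (fun q => prestr Y (pull g q)) (fun _ q => lamB q)).
  apply: eq_bigl => q; case dq: (pdom q == g @: Y) => //=.
  rewrite pdom_h ?(eqP dq) // eqxx /=; congr (_ == s); apply/ffunP => a.
  rewrite !ffunE; case: ifP => // aX.
  by rewrite (fintype.subsetP sXY a aX).
- move=> X hX.
  rewrite (eq_bigr (fun s => \sum_g om g * \sum_(r | (pdom r == g @: X) &&
             (prestr X (pull g r) == s)) lamB r)); last first.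
    by move=> s /eqP ds; rewrite /lamA ds hX.
  rewrite exchange_big /= -om1; apply: eq_bigr => g _; rewrite -big_distrr /=.
  rewrite (@sum_fiber R _ _ (fun r : {ffun B -> option C} => pdom r == g @: X)
      (fun s => pdom s == X)
      (fun r => prestr X (pull g r)) (fun _ r => lamB r)).
  rewrite (eq_bigl (fun r => pdom r == g @: X)); last first.
    by move=> r; case: eqP => //= dr; rewrite pdom_h // eqxx.
  have [_ _ F3 _] := FB.
  by rewrite F3 ?mulr1 // (leq_trans (leq_imset_card _ _) hX).
- move=> s _; rewrite /lamA; case: ifP => // _.
  apply: sumr_ge0 => g _; apply: mulr_ge0 => //.
  by apply: sumr_ge0 => r _; exact: feas_ge0 FB r.
Qed.

End Constr.

#[global] Arguments lamA {R A B C} k om lamB s.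

Lemma eq_forall_b (T : finType) (P1 P2 : pred T) :
  (forall x, P1 x = P2 x) -> [forall x, P1 x] = [forall x, P2 x].
Proof. by move=> E; apply/forallP/forallP => H x; rewrite ?E // -E. Qed.

Section Value.
Variables (R : realType) (sig : finType) (ar : sig -> nat) (A B C : finType)
  (SA : sstruct ar A) (SB : sstruct ar B) (SC : sstruct ar C) (k : nat)
  (om : {ffun A -> B} -> R) (lamB : {ffun B -> option C} -> R).
Hypotheses (om0 : forall g, 0 <= om g) (om1 : \sum_g om g = 1)
  (FB : SA_feasible k lamB) (hk : (\max_(f : sig) ar f <= k)%N)
  (hC : nonneg_struct SC)
  (Hov : forall (f : sig) (x : (ar f).-tuple B),
        ratr (SB f x) <=
        \sum_(g : {ffun A -> B})
           om g * \sum_(y : (ar f).-tuple A | map_tuple g y == x)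
                        ratr (SA f y)).

Definition W f (y : (ar f).-tuple B) : R :=
  \sum_(r : {ffun B -> option C} | pdom r == [set z in y]) lamB r *
    \sum_(t : (ar f).-tuple C | [forall i, r (tnth y i) == Some (tnth t i)])
       ratr (SC f t).

Lemma W_ge0 f y : 0 <= W f y.
Proof.
apply: sumr_ge0 => r _; apply: mulr_ge0; first exact: feas_ge0 FB r.
by apply: sumr_ge0 => t _; rewrite ler0q.
Qed.

Lemma valB : SA_value SB SC lamB =
  \sum_f \sum_(y : (ar f).-tuple B) W f y * ratr (SB f y).
Proof.
apply: eq_bigr => f _; apply: eq_bigr => y _; rewrite /W big_distrl.
apply: eq_bigr => r _; rewrite big_distrr big_distrl; apply: eq_bigr => t _ /=.
by rewrite mulrAC.
Qed.

Lemma valA_fx f (x : (ar f).-tuple A) :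
  \sum_(s : {ffun A -> option C} | pdom s == [set y in x])
      \sum_(t : (ar f).-tuple C | [forall i, s (tnth x i) == Some (tnth t i)])
        lamA k om lamB s * ratr (SA f x) * ratr (SC f t) =
  ratr (SA f x) * \sum_g om g * W f (map_tuple g x).
Proof.
set X := [set y in x].
have hX : (#|X| <= k)%N.
  rewrite cardsE (leq_trans (card_size _)) // size_tuple.
  exact: leq_trans (leq_bigmax f) hk.
pose cs (s : {ffun A -> option C}) : R :=
  \sum_(t : (ar f).-tuple C | [forall i, s (tnth x i) == Some (tnth t i)])
     ratr (SC f t).
rewrite (eq_bigr (fun s => ratr (SA f x) * (lamA k om lamB s * cs s))); last first.
  move=> s _; rewrite /cs !big_distrr; apply: eq_bigr => t _ /=.
  by rewrite -mulrA mulrCA.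
rewrite -big_distrr; congr (_ * _).
rewrite (eq_bigr (fun s => \sum_g om g * \sum_(r | (pdom r == g @: X) &&
           (prestr X (pull g r) == s)) lamB r * cs s)); last first.
  move=> s /eqP ds; rewrite /lamA ds hX big_distrl; apply: eq_bigr => g _ /=.
  by rewrite -mulrA big_distrl.
rewrite exchange_big /=; apply: eq_bigr => g _; rewrite -big_distrr /=.
congr (_ * _).
rewrite (@sum_fiber R _ _ (fun r : {ffun B -> option C} => pdom r == g @: X)
      (fun s => pdom s == X)
      (fun r => prestr X (pull g r)) (fun s r => lamB r * cs s)).
have gXE : g @: X = [set z in map_tuple g x].
  apply/setP => z; rewrite inE; apply/imsetP/mapP => -[y yx ->]; exists y => //.
    by rewrite inE in yx.
  by rewrite inE.
rewrite /W -gXE; apply: eq_big => r.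
  by case: eqP => //= dr; rewrite pdom_h // eqxx.
move=> /andP[/eqP dr _]; congr (_ * _); apply: eq_bigl => t.
apply: eq_forall_b => i.
by rewrite !ffunE inE mem_tnth tnth_map.
Qed.

Lemma val_le : SA_value SB SC lamB <= SA_value SA SC (lamA k om lamB).
Proof.
rewrite valB /SA_value; apply: ler_sum => f _.
rewrite (eq_bigr (fun x => ratr (SA f x) * \sum_g om g * W f (map_tuple g x)));
  last by move=> x _; apply: valA_fx.
have -> : \sum_(x : (ar f).-tuple A) ratr (SA f x) * \sum_g om g * W f (map_tuple g x)
  = \sum_(y : (ar f).-tuple B) W f y *
      (\sum_g om g * \sum_(x : (ar f).-tuple A | map_tuple g x == y) ratr (SA f x)).
  transitivity (\sum_(g : {ffun A -> B}) \sum_(y : (ar f).-tuple B)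
     \sum_(x : (ar f).-tuple A | map_tuple g x == y) W f y * (om g * ratr (SA f x))).
    rewrite (eq_bigr (fun x : (ar f).-tuple A => \sum_(g : {ffun A -> B}) W f (map_tuple g x) * (om g * ratr (SA f x))));
      last first.
      move=> x _; rewrite big_distrr; apply: eq_bigr => g _ /=.
      by rewrite mulrA [LHS]mulrC [om g * _]mulrC.
    rewrite exchange_big /=; apply: eq_bigr => g _.
    rewrite (partition_big (fun x : (ar f).-tuple A => map_tuple g x) xpredT) //.
    apply: eq_bigr => y _; apply: eq_bigr => x /= /eqP <-.
    done.
  rewrite exchange_big /=; apply: eq_bigr => y _; rewrite big_distrr.
  apply: eq_bigr => g _ /=; rewrite -big_distrr -big_distrr /=.
  done.
apply: ler_sum => y _; apply: ler_wpM2l; first exact: W_ge0.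
exact: Hov.
Qed.

End Value.

Theorem proposition23 (R : realType) (sig : finType) (ar : sig -> nat)
  (A B : finType) (SA : sstruct ar A) (SB : sstruct ar B)
  (hA : nonneg_struct SA) (hB : nonneg_struct SB)
  (k : nat) (hk : (\max_(f : sig) ar f <= k)%N) :
  exists_overcast R SA SB ->
  forall (C : finType) (SC : sstruct ar C), nonneg_struct SC ->
    opt_frac R k SB SC <= opt_frac R k SA SC.
Proof.
move=> [om [om0 om1 Hov]] C SC hC.
rewrite /opt_frac.
pose M : R := \sum_f \sum_(x : (ar f).-tuple A)
    \sum_(s : {ffun A -> option C} | pdom s == [set y in x])
      \sum_(t : (ar f).-tuple C | [forall i, s (tnth x i) == Some (tnth t i)])
        ratr (SA f x) * ratr (SC f t).
have bnd : forall lam : {ffun A -> option C} -> R,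
    SA_feasible k lam -> SA_value SA SC lam <= M.
  move=> lam Fl; apply: ler_sum => f _; apply: ler_sum => x _.
  apply: ler_sum => s _; apply: ler_sum => t _.
  rewrite -mulrA; apply: ler_piMl; last exact: feas_le1 Fl s.
  by apply: mulr_ge0; rewrite ler0q.
have nneg : forall lam : {ffun A -> option C} -> R,
    SA_feasible k lam -> 0 <= SA_value SA SC lam.
  move=> lam Fl; apply: sumr_ge0 => f _; apply: sumr_ge0 => x _.
  apply: sumr_ge0 => s _; apply: sumr_ge0 => t _.
  apply: mulr_ge0; [apply: mulr_ge0; [exact: feas_ge0 Fl s|] |];
    by rewrite ler0q.
have hsup : forall lam : {ffun A -> option C} -> R, SA_feasible k lam ->
    SA_value SA SC lam <=
    sup [set SA_value SA SC lam | lam in [set lam | SA_feasible k lam]].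
  move=> lam Fl; apply: sup_upper_bound; last by exists lam.
  split; first by exists (SA_value SA SC lam); exists lam.
  by exists M => v [l Fl' <-]; exact: bnd.
case: (pselect (exists lamB : {ffun B -> option C} -> R, SA_feasible k lamB))
  => [[lB FlB]|nB].
  apply: ge_sup; first by exists (SA_value SB SC lB); exists lB.
  move=> v [l Fl <-].
  exact: le_trans (@val_le _ _ _ _ _ _ SA SB SC _ om _ Fl hk hC Hov) (hsup _ (@lamA_feas _ _ _ _ _ _ _ om0 om1 Fl)).
rewrite [X in sup X <= _](_ : _ = set0); last first.
  by apply/seteqP; split=> v // [l Fl _]; exact: nB (ex_intro _ l Fl).
rewrite sup0.
case: (pselect (exists lA : {ffun A -> option C} -> R, SA_feasible k lA))
  => [[lA FA]|nA].
  exact: le_trans (nneg _ FA) (hsup _ FA).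
rewrite [X in _ <= sup X](_ : _ = set0); last first.
  by apply/seteqP; split=> v // [l Fl _]; exact: nA (ex_intro _ l Fl).
by rewrite sup0.
Qed.
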